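(* Let $I\subset S=K[x_1,\dots,x_n]$ be a monomial ideal generated in a single degree which has linear quotients. Then the first homological shift ideal $\mathrm{HS}_1(I)$ has linear quotients.
   Context: A monomial ideal $I$ has linear quotients if for some ordering $u_1,\dots,u_m$ of its minimal monomial generating set $G(I)$ all colon ideals $(u_1,\dots,u_{i-1}):u_i$ are generated by variables. For a monomial ideal $I$ with minimal multigraded free resolution $\mathbb F$, write $F_k=\bigoplus_{j=1}^{\beta_k(I)}S(-\mathbf a_{kj})$ with $\mathbf a_{kj}\in\mathbb Z_{\ge0}^n$; the $k$th homological shift ideal $\mathrm{HS}_k(I)$ is the monomial ideal generated by the monomials $\mathbf x^{\mathbf a_{kj}}=x_1^{a_1}\cdots x_n^{a_n}$, $j=1,\dots,\beta_k(I)$. (So $\mathrm{HS}_0(I)=I$.) *)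

(* Defs.v *)
From HB Require Import structures.
From mathcomp Require Import all_boot all_order all_algebra.
Set Implicit Arguments. Unset Strict Implicit. Unset Printing Implicit Defensive.
Import GRing.Theory.

(* Monomials of S = K[x_1..x_n] represented by their exponent vectors. *)
Definition mon (n : nat) := {ffun 'I_n -> nat}.

Definition mon1 (n : nat) : mon n := [ffun => 0%N].
Definition mmul n (u v : mon n) : mon n := [ffun k => (u k + v k)%N].
Definition mdiv n (u v : mon n) : bool := [forall k, u k <= v k].
Definition mdeg n (u : mon n) : nat := (\sum_(k < n) u k)%N.
(* a / x_k (used only when a_k > 0) *)
Definition mdivvar n (a : mon n) (k : 'I_n) : mon n :=
  [ffun i => if i == k then (a i).-1 else a i].

(* A monomial ideal is identified with its set of monomials (it is spanned
   by them). *)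
Definition monideal (n : nat) := mon n -> Prop.

Definition gen n (s : seq (mon n)) : monideal n := fun v => has (fun u => mdiv u v) s.

Definition is_mingens n (J : monideal n) (s : seq (mon n)) : Prop :=
  [/\ uniq s, (forall v, J v <-> gen s v) &
      (forall u w, u \in s -> w \in s -> mdiv u w -> u = w)].

Definition colon n (J : monideal n) (u : mon n) : monideal n := fun v => J (mmul v u).

Definition var_generated n (J : monideal n) : Prop :=
  exists V : seq 'I_n, forall v, J v <-> (exists2 k, k \in V & (0 < v k)%N).

Definition linear_quotients n (J : monideal n) : Prop :=
  exists s : seq (mon n), is_mingens J s /\
    forall i, (i < size s)%N -> var_generated (colon (gen (take i s)) (nth (mon1 n) s i)).

(* Minimal multigraded free resolution of I with G(I) = G = [u_0..u_{m-1}]: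
   F_0 = (+)_j S(-u_j) --> I, e_j |-> u_j, and F_1 is a minimal free cover of
   Syz = ker(F_0 -> I); hence beta_{1,a}(I) = dim_K (Syz / m Syz)_a.
   The degree-a part of F_0 has basis {x^(a-u_j) e_j | u_j divides x^a}, so
   an element of F_0 of degree a is a coefficient vector c : 'I_m -> K
   supported on those j; it lies in Syz_a iff sum_j c_j = 0.
   Multiplication by x_k maps (F_0)_(a/x_k) to (F_0)_a keeping coefficients,
   so (m Syz)_a = sum_{k, a_k>0} Syz_(a/x_k). *)
Definition in_syz (K : fieldType) n (G : seq (mon n)) (b : mon n)
    (c : 'I_(size G) -> K) : Prop :=
  (forall j, c j != 0%R -> mdiv (nth (mon1 n) G j) b) /\ (\sum_(j < size G) c j)%R = 0%R.

Definition betti1_nz (K : fieldType) n (G : seq (mon n)) (a : mon n) : Prop :=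
  exists c : 'I_(size G) -> K, @in_syz K n G a c /\
    ~ (exists d : 'I_n -> 'I_(size G) -> K,
         (forall k, (0 < a k)%N -> @in_syz K n G (mdivvar a k) (d k)) /\
         (forall k, a k = 0%N -> forall j, d k j = 0%R) /\
         (forall j, c j = (\sum_(k < n) d k j)%R)).

Definition HS1 (K : fieldType) n (G : seq (mon n)) : monideal n :=
  fun v => exists2 a, betti1_nz K G a & mdiv a v.

(* Main.v *)
Require Import Defs.
From mathcomp Require Import all_boot all_order all_algebra.
From mathcomp Require Import zify.
Set Implicit Arguments. Unset Strict Implicit. Unset Printing Implicit Defensive.
Import GRing.Theory.

Lemma mdivP n (u v : mon n) : reflect (forall k, u k <= v k) (mdiv u v).
Proof. exact: (iffP forallP). Qed.

Lemma mdiv_refl n (u : mon n) : mdiv u u.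
Proof. by apply/mdivP. Qed.

Lemma mdiv_trans n (u v w : mon n) : mdiv u v -> mdiv v w -> mdiv u w.
Proof. move=> /mdivP h1 /mdivP h2; apply/mdivP => k; exact: leq_trans (h1 k) (h2 k). Qed.

Lemma mdiv_anti n (u v : mon n) : mdiv u v -> mdiv v u -> u = v.
Proof.
move=> /mdivP h1 /mdivP h2; apply/ffunP => k; apply/eqP; rewrite eqn_leq h1 h2. by [].
Qed.

Definition unitm n (k : 'I_n) : mon n := [ffun i => nat_of_bool (i == k)].

Lemma mmulE n (u v : mon n) k : mmul u v k = u k + v k.
Proof. by rewrite ffunE. Qed.

Lemma unitmE n (k i : 'I_n) : unitm k i = (i == k).
Proof. by rewrite ffunE. Qed.

Lemma mdeg_mmul n (u v : mon n) : mdeg (mmul u v) = mdeg u + mdeg v.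
Proof. rewrite /mdeg -big_split /=; apply: eq_bigr => i _; by rewrite mmulE. Qed.

Lemma mdeg_unitm n (k : 'I_n) : mdeg (unitm k) = 1.
Proof.
rewrite /mdeg (bigD1 k) //= unitmE eqxx big1 // => i /negbTE hi; by rewrite unitmE hi.
Qed.

Lemma mdiv_eq n (u v : mon n) : mdiv u v -> mdeg u = mdeg v -> u = v.
Proof.
move=> /mdivP h hd.
have e : mdeg v = mdeg u + \sum_(k < n) (v k - u k).
  rewrite /mdeg -big_split /=; apply: eq_bigr => k _; have := h k; lia.
have : \sum_(k < n) (v k - u k) == 0 by apply/eqP; lia.
rewrite sum_nat_eq0 => /forallP hk; apply/ffunP => k.
have := hk k; have := h k; rewrite /=; lia.
Qed.

Lemma mdiv_unit n (u v : mon n) k : mdiv u v -> v k < u k + 0 -> False.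
Proof. move=> /mdivP h; have := h k; lia. Qed.

Lemma gen_up n (s : seq (mon n)) u v : gen s u -> mdiv u v -> gen s v.
Proof.
move=> /hasP [p ps pu] uv; apply/hasP; exists p => //; exact: mdiv_trans pu uv.
Qed.

Lemma gen_mem n (s : seq (mon n)) p v : p \in s -> mdiv p v -> gen s v.
Proof. by move=> ps pv; apply/hasP; exists p. Qed.

Lemma mingens_mem n (J : monideal n) s t x :
  is_mingens J s -> is_mingens J t -> x \in s -> x \in t.
Proof.
move=> [us hs as_] [ut ht at_] xs.
have : gen t x by apply/ht/hs; exact: gen_mem xs (mdiv_refl x).
move=> /hasP [y yt yx].
have : gen s y by apply/hs/ht; exact: gen_mem yt (mdiv_refl y).
move=> /hasP [z zs zy].
have zx := as_ z x zs xs (mdiv_trans zy yx).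
rewrite zx in zy; by have <- : y = x by apply: mdiv_anti.
Qed.
Definition lq n (L : seq (mon n)) := forall i, i < size L ->
  var_generated (colon (gen (take i L)) (nth (mon1 n) L i)).

Lemma mem_take_nth n (L : seq (mon n)) i e : e < i -> i <= size L ->
  nth (mon1 n) L e \in take i L.
Proof.
move=> hei hi; rewrite -(nth_take _ hei); apply: mem_nth; by rewrite size_take_min leq_min hei (leq_trans hei hi).
Qed.

Lemma take_index n (L : seq (mon n)) i p : p \in take i L ->
  index p (take i L) < i /\ nth (mon1 n) L (index p (take i L)) = p.
Proof.
move=> pin; have h : index p (take i L) < minn i (size L).
  by rewrite -size_take_min index_mem.
split; first lia.
by rewrite -(@nth_take i) ?nth_index //; lia.
Qed.

Lemma colon_step n (L : seq (mon n)) i e : lq L -> i < size L -> e < i ->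
  exists s, nth (mon1 n) L i s < nth (mon1 n) L e s /\
    exists2 f, f < i & mdiv (nth (mon1 n) L f) (mmul (unitm s) (nth (mon1 n) L i)).
Proof.
move=> hlq hi hei; have [V hV] := hlq i hi.
set ui := nth _ L i; set ue := nth _ L e.
pose v : mon n := [ffun k => ue k - ui k].
have : colon (gen (take i L)) ui v.
  rewrite /colon; apply: (@gen_mem _ _ ue).
  - apply: mem_take_nth => //; lia.
  - apply/mdivP => k; rewrite mmulE ffunE; lia.
move=> /hV [s sV]; rewrite ffunE => hs.
exists s; split; first lia.
have : colon (gen (take i L)) ui (unitm s) by apply/hV; exists s => //; rewrite unitmE eqxx.
move=> /hasP [p pin pdiv].
have [h1 h2] := take_index pin.
by exists (index p (take i L)); rewrite ?h2.
Qed.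

Lemma key n (L : seq (mon n)) j c (w : mon n) : lq L ->
  (forall a b, a < size L -> b < size L -> mdeg (nth (mon1 n) L a) = mdeg (nth (mon1 n) L b)) ->
  j <= size L -> c < j -> mdiv (nth (mon1 n) L c) w ->
  (forall i, i < j -> mdiv (nth (mon1 n) L i) w -> i = c) ->
  forall e, e < j -> e <> c -> exists t, w t < nth (mon1 n) L e t /\
    exists g, [/\ g < j, g <> c & mdiv (nth (mon1 n) L g) (mmul (unitm t) w)].
Proof.
move=> hlq hdeg hj hc hcw huniq e.
elim/ltn_ind: e => e IH he hec.
have /mdivP hcw' := hcw.
case: (ltngtP e c) => [hlt | hgt | heq]; last by [].
-
  have [s [hs [e' he' hdiv]]] := colon_step hlq (leq_trans hc hj) hlt.
  exists s; split.
    rewrite ltnNge; apply/negP => hws.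
    have : e' = c.
      apply: huniq; first lia.
      apply: mdiv_trans hdiv _; apply/mdivP => k; rewrite mmulE unitmE.
      case: eqP => [-> | _]; have := hcw' k; rewrite /=; try lia.
    lia.
  exists e'; split; try lia.
  apply: mdiv_trans hdiv _; apply/mdivP => k; rewrite !mmulE; have := hcw' k; lia.
-
  have [s [hs [f hf hdiv]]] := colon_step hlq (leq_trans he hj) hgt.
  have /mdivP hdiv' := hdiv.
  case: (eqVneq f c) => [hfc | hfc].
  +
    subst f.
    have : ~~ mdiv (nth (mon1 n) L e) w.
      apply/negP => h; have := huniq e he h; lia.
    move=> /mdivP hnd.
    have [t ht] : exists t, w t < nth (mon1 n) L e t.
      apply/existsP; rewrite -[[exists _, _]]negbK negb_exists; apply/negP => /forallP hall.
      apply: hnd => k; have := hall k; rewrite -leqNgt. by [].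
    have hts : t != s.
      apply/eqP => hts; subst t; have := hcw' s; lia.
    have heqm : mmul (unitm t) (nth (mon1 n) L c) = mmul (unitm s) (nth (mon1 n) L e).
      apply: mdiv_eq.
        apply/mdivP => k; rewrite !mmulE !unitmE.
        have := hdiv' k; rewrite mmulE unitmE.
        case: (eqVneq k t) => [-> | hkt].
          rewrite (negbTE hts) /=; have := hcw' t; lia.
        by move=> h; exact: h.
      by rewrite !mdeg_mmul !mdeg_unitm (hdeg c e (leq_trans hc hj) (leq_trans he hj)).
    exists t; split => //; exists e; split => //.
    apply/mdivP => k; rewrite mmulE.
    have := congr1 (fun m : mon n => m k) heqm; rewrite /= !mmulE !unitmE.
    have := hcw' k; case: (k == t); case: (k == s) => /=; lia.
  + have hfc' : f <> c by apply/eqP.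
    have [t [ht [g [hg hgc hgd]]]] := IH f hf (leq_trans hf (ltnW he)) hfc'.
    exists t; split; last by exists g.
    have := hdiv' t; rewrite mmulE unitmE.
    case: (eqVneq t s) => [hts | hts].
      subst t; rewrite /=; have := hcw' s; lia.
    by rewrite /=; lia.
Qed.

Definition two_div n (L : seq (mon n)) j (z : mon n) : bool :=
  [exists p : 'I_j, exists q : 'I_j,
    [&& (p : nat) != q, mdiv (nth (mon1 n) L p) z & mdiv (nth (mon1 n) L q) z]].
Definition one_div n (L : seq (mon n)) j (z : mon n) : bool :=
  [exists p : 'I_j, mdiv (nth (mon1 n) L p) z].
Definition Qb n (L : seq (mon n)) j (k : 'I_n) : bool :=
  one_div L j (mmul (unitm k) (nth (mon1 n) L j)) &&
  ~~ two_div L j (mmul (unitm k) (nth (mon1 n) L j)).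
Definition block n (L : seq (mon n)) j : seq (mon n) :=
  [seq mmul (unitm k) (nth (mon1 n) L j) | k <- enum 'I_n & Qb L j k].
Definition blocks n (L : seq (mon n)) := [seq block L j | j <- iota 0 (size L)].
Definition hs n (L : seq (mon n)) := flatten (blocks L).

Lemma two_divP n (L : seq (mon n)) j z :
  reflect (exists p q, [/\ p < j, q < j, p <> q, mdiv (nth (mon1 n) L p) z
                          & mdiv (nth (mon1 n) L q) z]) (two_div L j z).
Proof.
apply: (iffP existsP).
- move=> [p /existsP [q /and3P [hpq h1 h2]]]; exists p, q; split => //; exact/eqP.
- move=> [p [q [hp hq hpq h1 h2]]]; exists (Ordinal hp); apply/existsP.
  exists (Ordinal hq); rewrite /= h1 h2 !andbT; exact/eqP.
Qed.

Lemma one_divP n (L : seq (mon n)) j z :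
  reflect (exists2 p, p < j & mdiv (nth (mon1 n) L p) z) (one_div L j z).
Proof.
apply: (iffP existsP).
- by move=> [p h]; exists p.
- by move=> [p hp h]; exists (Ordinal hp).
Qed.

Lemma mem_block n (L : seq (mon n)) j w :
  reflect (exists k, w = mmul (unitm k) (nth (mon1 n) L j) /\ Qb L j k) (w \in block L j).
Proof.
apply: (iffP mapP).
- by move=> [k]; rewrite mem_filter => /andP [hq _] ->; exists k.
- by move=> [k [-> hq]]; exists k => //; rewrite mem_filter hq mem_enum.
Qed.

Lemma cover n (L : seq (mon n)) : lq L -> forall j, j <= size L -> forall z, two_div L j z ->
  exists i a, [/\ i < j, a \in block L i & mdiv a z].
Proof.
move=> hlq; elim=> [|j IH] hj z /two_divP [p [q [hp hq hpq h1 h2]]]; first by [].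
have step : forall r, r < j -> mdiv (nth (mon1 n) L r) z -> mdiv (nth (mon1 n) L j) z ->
    exists i a, [/\ i < j.+1, a \in block L i & mdiv a z].
  move=> r hr hrz hjz.
  have [s [hs [f hf hdiv]]] := colon_step hlq hj hr.
  set y := mmul (unitm s) (nth (mon1 n) L j).
  have hyz : mdiv y z.
    apply/mdivP => k; rewrite mmulE unitmE.
    have := (mdivP _ _ hjz) k; have := (mdivP _ _ hrz) s.
    case: eqP => [-> | _] /=; lia.
  case: (boolP (two_div L j y)) => hy2.
  - have [i [a [hi ha hd]]] := IH (ltnW hj) y hy2.
    exists i, a; split => //; [exact: ltnW | exact: mdiv_trans hd hyz].
  - exists j, y; split => //; apply/mem_block; exists s; split => //.
    rewrite /Qb hy2 andbT; apply/one_divP; by exists f.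
case: (ltnP p j) => hpj; case: (ltnP q j) => hqj.
- have [i [a [hi ha hd]]] := IH (ltnW hj) z (introT (two_divP _ _ _) (ex_intro _ p (ex_intro _ q (And5 hpj hqj hpq h1 h2)))).
  exists i, a; split => //; exact: ltnW.
- have hqj' : q = j by lia.
  by apply: (step p) => //; rewrite -hqj'.
- have hpj' : p = j by lia.
  by apply: (step q) => //; rewrite -hpj'.
- lia.
Qed.

Lemma pos_helper a b c : a < b -> b <= c + a -> 0 < c.
Proof. lia. Qed.

Lemma flatten_pos (T : Type) (x0 : T) (bs : seq (seq T)) i : i < size (flatten bs) ->
  exists j i', [/\ j < size bs, i' < size (nth [::] bs j),
     take i (flatten bs) = flatten (take j bs) ++ take i' (nth [::] bs j)
   & nth x0 (flatten bs) i = nth x0 (nth [::] bs j) i'].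
Proof.
elim: bs i => [|b bs IH] i //=.
rewrite size_cat => hi.
case: (ltnP i (size b)) => hib.
- by exists 0, i; split => //=; rewrite ?take_cat ?nth_cat hib.
- have hi' : i - size b < size (flatten bs) by rewrite ltn_subLR.
  have [j [i' [h1 h2 h3 h4]]] := IH (i - size b) hi'.
  exists j.+1, i'; split => //=.
  + by rewrite take_cat ltnNge hib /= h3 catA.
  + by rewrite nth_cat ltnNge hib /= h4.
Qed.

Lemma nth_notin_take (T : eqType) (x0 : T) (b : seq T) i :
  uniq b -> i < size b -> nth x0 b i \notin take i b.
Proof.
move=> ub hi; rewrite -(cat_take_drop i b) cat_uniq in ub.
move: ub => /and3P [_ hh _].
apply/negP => hin; move/negP: hh; apply; apply/hasP; exists (nth x0 b i) => //.
have : nth x0 (drop i b) 0 \in drop i b by apply: mem_nth; rewrite size_drop subn_gt0.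
by rewrite nth_drop addn0.
Qed.

Lemma unitm_inj n (u : mon n) : injective (fun k : 'I_n => mmul (unitm k) u).
Proof.
move=> k1 k2 /= h; have := congr1 (fun m : mon n => m k1) h.
rewrite /= !mmulE !unitmE eqxx; case: eqP => // _ /=; lia.
Qed.

Lemma block_uniq n (L : seq (mon n)) j : uniq (block L j).
Proof. rewrite /block map_inj_uniq; [exact: filter_uniq (enum_uniq _) | exact: (@unitm_inj n)]. Qed.

Lemma take_blocks n (L : seq (mon n)) j : j <= size L ->
  take j (blocks L) = [seq block L i | i <- iota 0 j].
Proof. by move=> hj; rewrite /blocks -map_take take_iota; congr (map _ (iota 0 _)); lia. Qed.

Lemma mem_pre n (L : seq (mon n)) j i a : j <= size L -> i < j -> a \in block L i ->
  a \in flatten (take j (blocks L)).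
Proof.
move=> hj hi ha; apply/flattenP; exists (block L i) => //.
by rewrite take_blocks //; apply: map_f; rewrite mem_iota.
Qed.

Lemma block_colon n (L : seq (mon n)) j i' : lq L ->
  (forall a b, a < size L -> b < size L -> mdeg (nth (mon1 n) L a) = mdeg (nth (mon1 n) L b)) ->
  j < size L -> i' < size (block L j) ->
  var_generated (colon (gen (flatten (take j (blocks L)) ++ take i' (block L j)))
                       (nth (mon1 n) (block L j) i')).
Proof.
move=> hlq hdeg hj hi'.
set pre := _ ++ _; set w := nth _ _ i'.
have wmem : w \in block L j by apply: mem_nth.
have [k [hw hQ]] := mem_block _ _ _ wmem.
move: hQ => /andP [/one_divP [c hc hcw] hn2]; rewrite -hw in hcw hn2.
have huc : forall i, i < j -> mdiv (nth (mon1 n) L i) w -> i = c.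
  move=> i hi hiw; apply/eqP; apply/negP => /negP hic; move/negP: hn2; apply.
  apply/two_divP; exists i, c; split => //; exact/eqP.
have star : forall p, p \in pre -> exists t, w t < p t /\ gen pre (mmul (unitm t) w).
  move=> p; rewrite mem_cat => /orP [].
  - move=> /flattenP [b]; rewrite take_blocks ?(ltnW hj) // => /mapP [j' hj' ->] hp.
    rewrite mem_iota /= in hj'.
    have [l [hpl /andP [/one_divP [i0 hi0 hi0d] _]]] := mem_block _ _ _ hp.
    rewrite -hpl in hi0d.
    have hj'd : mdiv (nth (mon1 n) L j') p.
      by rewrite hpl; apply/mdivP => x; rewrite mmulE; lia.
    have [e [he hec hep]] : exists e, [/\ e < j, e <> c & mdiv (nth (mon1 n) L e) p].
      case: (eqVneq i0 c) => [hic | hic].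
      + exists j'; split => //; lia.
      + exists i0; split => //; [lia | exact/eqP].
    have [t [ht [g [hg hgc hgd]]]] := key hlq hdeg (ltnW hj) hc hcw huc he hec.
    exists t; split.
      exact: leq_trans ht ((mdivP _ _ hep) t).
    have h2 : two_div L j (mmul (unitm t) w).
      apply/two_divP; exists g, c; split => //.
      by apply: mdiv_trans hcw _; apply/mdivP => x; rewrite mmulE; lia.
    have [i [a [hi ha had]]] := cover hlq (ltnW hj) h2.
    apply: (gen_mem _ had); rewrite mem_cat; apply/orP; left.
    exact: mem_pre (ltnW hj) hi ha.
  - move=> hp.
    have hpw : p != w.
      apply/eqP => hpw; rewrite hpw in hp.
      by move: hp; apply/negP; apply: nth_notin_take => //; exact: block_uniq.
    have [l [hpl _]] := mem_block _ _ _ (mem_take hp).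
    have hlk : l != k by apply/eqP => hlk; move: hpw; rewrite hpl hw hlk eqxx.
    exists l; split.
      by rewrite hpl hw !mmulE !unitmE eqxx (negbTE hlk) /=; lia.
    apply: (gen_mem (p := p)); first by rewrite mem_cat hp orbT.
    apply/mdivP => x; rewrite hpl hw !mmulE; lia.
exists [seq t <- enum 'I_n | has (fun q => mdiv q (mmul (unitm t) w)) pre] => v; split.
- move=> /hasP [p pin pdiv]; have [t [ht hg]] := star p pin.
  exists t; first by rewrite mem_filter mem_enum andbT; exact: hg.
  have := (mdivP _ _ pdiv) t; rewrite mmulE => h.
  by apply: (@pos_helper (w t) (p t)).
- move=> [t]; rewrite mem_filter => /andP [hg _] hvt.
  apply: (gen_up hg); apply/mdivP => x; rewrite !mmulE unitmE.
  case: eqP => [-> | _] /=; lia.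
Qed.

Lemma sum_ind (K : fieldType) N (a : 'I_N) : (\sum_(j < N) ((j == a)%:R : K))%R = 1%R.
Proof.
rewrite (bigD1 a) //= eqxx big1 ?addr0 // => j /negbTE hj; by rewrite hj.
Qed.

Lemma betti_two (K : fieldType) n (G : seq (mon n)) a : uniq G -> betti1_nz K G a ->
  exists g1 g2, [/\ g1 \in G, g2 \in G, g1 != g2, mdiv g1 a & mdiv g2 a].
Proof.
move=> uG [c [[hsupp hsum] hnd]].
case: (boolP [exists j1 : 'I_(size G), exists j2 : 'I_(size G),
   (j1 != j2) && mdiv (nth (mon1 n) G j1) a && mdiv (nth (mon1 n) G j2) a]).
- move=> /existsP [j1 /existsP [j2 /andP [/andP [hne h1] h2]]].
  exists (nth (mon1 n) G j1), (nth (mon1 n) G j2); split => //; try exact: mem_nth.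
  by rewrite nth_uniq.
- move=> hno; exfalso; apply: hnd.
  have c0 : forall j, c j = 0%R.
    move=> j; case: (eqVneq (c j) 0%R) => // hcj; exfalso.
    have hsum' := hsum; rewrite (bigD1 j) //= big1 ?addr0 in hsum'.
      by move/eqP: hcj; rewrite hsum'.
    move=> j' hj'; case: (eqVneq (c j') 0%R) => // hcj'.
    move/negP: hno => hno; exfalso; apply: hno; apply/existsP; exists j'; apply/existsP; exists j.
    by rewrite hj' (hsupp _ hcj') (hsupp _ hcj).
  exists (fun _ _ => 0%R); split; [|split].
  + move=> k _; split => [j|]; first by rewrite eqxx.
    by rewrite big1.
  + by [].
  + by move=> j; rewrite c0 big1.
Qed.

Lemma betti_of (K : fieldType) n (G : seq (mon n)) g1 g2 k : uniq G ->
  (forall u w, u \in G -> w \in G -> mdiv u w -> u = w) ->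
  g1 \in G -> g2 \in G -> g1 != g2 -> mdiv g1 (mmul (unitm k) g2) ->
  betti1_nz K G (mmul (unitm k) g2).
Proof.
move=> uG anti h1 h2 hne hd.
set w := mmul (unitm k) g2.
have hi1 : index g1 G < size G by rewrite index_mem.
have hi2 : index g2 G < size G by rewrite index_mem.
pose i1 : 'I_(size G) := Ordinal hi1.
pose i2 : 'I_(size G) := Ordinal hi2.
have e1 : nth (mon1 n) G i1 = g1 by rewrite /= nth_index.
have e2 : nth (mon1 n) G i2 = g2 by rewrite /= nth_index.
have hi12 : i2 != i1.
  apply/eqP => h; move: hne; rewrite -e1 -e2 h eqxx. by [].
have hg2w : mdiv g2 w by apply/mdivP => x; rewrite mmulE; lia.
exists (fun j : 'I_(size G) => ((j == i2)%:R - (j == i1)%:R : K)%R); split.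
  split.
  - move=> j; case: (eqVneq j i2) => [-> | hj2]; first by rewrite e2.
    case: (eqVneq j i1) => [-> | hj1]; first by rewrite e1.
    by rewrite subrr eqxx.
  - by rewrite sumrB !sum_ind subrr.
move=> [d [hd1 [hd0 hdc]]].
have := hdc i2; rewrite eqxx (negbTE hi12) subr0.
rewrite (bigD1 k) //= big1 ?addr0; last first.
  move=> k' hk'; case: (eqVneq (d k' i2) 0%R) => // hnz; exfalso.
  case: (posnP (w k')) => hwk.
    by move: hnz; rewrite (hd0 k' hwk) eqxx.
  have [hs _] := hd1 k' hwk.
  have /mdivP := hs i2 hnz; rewrite e2 => /(_ k'); rewrite ffunE eqxx.
  move: hwk; rewrite /w mmulE unitmE (negbTE hk') /=; lia.
move=> hdk.
have hwk : 0 < w k by rewrite /w mmulE unitmE eqxx.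
have [hs hsum] := hd1 k hwk.
have hvar : mdivvar w k = g2.
  apply/ffunP => x; rewrite ffunE /w mmulE unitmE; case: eqP => [-> | _] //=.
move: hsum; rewrite (bigD1 i2) //= big1 ?addr0; last first.
  move=> j hj; case: (eqVneq (d k j) 0%R) => // hnz; exfalso.
  have := hs j hnz; rewrite hvar => hjd.
  have := anti _ _ (mem_nth (mon1 n) (ltn_ord j)) h2 hjd; rewrite -e2 => /eqP.
  rewrite nth_uniq // => /eqP hj'.
  have ej : j = i2 by apply: val_inj.
  by move: hj; rewrite ej eqxx.
rewrite -hdk => /eqP; rewrite oner_eq0. by [].
Qed.

Lemma uniq_flatten_map (T : eqType) (f : nat -> seq T) (r : seq nat) : uniq r ->
  (forall x, uniq (f x)) ->
  (forall x y a, x \in r -> y \in r -> x != y -> a \in f x -> a \in f y -> False) ->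
  uniq (flatten (map f r)).
Proof.
elim: r => [|x r IH] //= /andP [xr ur] hu hd.
rewrite cat_uniq hu IH //=; last first.
  by move=> a b c ha hb; apply: hd; rewrite inE ?ha ?hb orbT.
rewrite andbT; apply/hasP => [[a /flattenP [b /mapP [y yr ->] ha] hax]].
apply: (hd x y a) => //; [by rewrite inE eqxx | by rewrite inE yr orbT |].
by apply/eqP => hxy; rewrite hxy yr in xr.
Qed.

Lemma mem_hs n (L : seq (mon n)) a :
  reflect (exists2 j, j < size L & a \in block L j) (a \in hs L).
Proof.
apply: (iffP flattenP).
- by move=> [b /mapP [j hj ->] ha]; exists j => //; rewrite mem_iota in hj.
- by move=> [j hj ha]; exists (block L j) => //; apply: map_f; rewrite mem_iota.
Qed.

Lemma blocks_disj n (L : seq (mon n)) j1 j2 a : j1 < j2 ->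
  a \in block L j1 -> a \in block L j2 -> False.
Proof.
move=> h12 /mem_block [k [-> /andP [/one_divP [i0 hi0 hd] _]]].
move=> /mem_block [l [hl /andP [_ hn2]]]; move/negP: hn2; apply; rewrite -hl.
apply/two_divP; exists i0, j1; split => //; try lia.
by apply/mdivP => x; rewrite mmulE; lia.
Qed.

Unset Implicit Arguments.

Theorem theorem1p3 (K : fieldType) (n : nat) (I : monideal n) (G : seq (mon n)) :
  is_mingens I G ->
  (forall u w, u \in G -> w \in G -> mdeg u = mdeg w) ->
  linear_quotients I ->
  linear_quotients (HS1 K G).
Proof.
move=> hG hdegG [L [hL hlqL]].
have hlq : lq L := hlqL.
have memLG : forall x, x \in L -> x \in G := fun x => mingens_mem hL hG.
have [uG _ antiG] := hG.
have [uL _ _] := hL.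
have hdeg : forall a b, a < size L -> b < size L ->
    mdeg (nth (mon1 n) L a) = mdeg (nth (mon1 n) L b).
  by move=> a b ha hb; apply: hdegG; apply: memLG; apply: mem_nth.
have degb : forall a, a \in hs L -> mdeg a = (mdeg (nth (mon1 n) L 0)).+1.
  move=> a /mem_hs [j hj /mem_block [k [-> _]]].
  rewrite mdeg_mmul mdeg_unitm (hdeg j 0) //; lia.
exists (hs L); split.
- split.
  + apply: uniq_flatten_map => [|x|x y a _ _ hxy hx hy]; first exact: iota_uniq.
      exact: block_uniq.
    case: (ltngtP x y) => h.
    * exact: blocks_disj h hx hy.
    * exact: blocks_disj h hy hx.
    * by move: hxy; rewrite h eqxx.
  + move=> v; split.
    * move=> [a hb hav].
      have [g1 [g2 [h1 h2 hne hd1 hd2]]] := betti_two uG hb.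
      have h1' : g1 \in L by apply: (mingens_mem hG hL).
      have h2' : g2 \in L by apply: (mingens_mem hG hL).
      have htwo : two_div L (size L) a.
        apply/two_divP; exists (index g1 L), (index g2 L); split; rewrite ?index_mem ?nth_index //.
        move=> hi; move: hne; rewrite -(nth_index (mon1 n) h1') -(nth_index (mon1 n) h2') hi eqxx.
        by [].
      have [i [a' [hi ha' had]]] := cover hlq (leqnn _) htwo.
      apply: (gen_mem (p := a')); first by apply/mem_hs; exists i.
      exact: mdiv_trans had hav.
    * move=> /hasP [w /mem_hs [j hj /mem_block [k [hw /andP [/one_divP [i0 hi0 hd] _]]]] hwv].
      exists w => //; rewrite hw.
      have hi0s : i0 < size L by apply: ltn_trans hi0 hj.
      have hm1 : nth (mon1 n) L i0 \in G by apply: memLG; apply: mem_nth.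
      have hm2 : nth (mon1 n) L j \in G by apply: memLG; apply: mem_nth.
      have hne : nth (mon1 n) L i0 != nth (mon1 n) L j.
        by rewrite (nth_uniq _ hi0s hj uL) neq_ltn hi0.
      exact: (@betti_of K n G (nth (mon1 n) L i0) (nth (mon1 n) L j) k uG antiG hm1 hm2 hne hd).
  + move=> a b ha hb hab; apply: mdiv_eq => //.
    by rewrite (degb a ha) (degb b hb).
- move=> i hi.
  have [j [i' [h1 h2 h3 h4]]] := flatten_pos (mon1 n) hi.
  rewrite /hs h3 h4.
  have hsz : size (blocks L) = size L by rewrite size_map size_iota.
  rewrite hsz in h1.
  have hnth : nth [::] (blocks L) j = block L j by rewrite (nth_map 0) ?size_iota // nth_iota.
  rewrite hnth in h2 *.
  exact: (block_colon hlq hdeg h1 h2).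
Qed.
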